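(* Let $S=K[x_1,\dots,x_n]$ with $K$ an $F$-finite field of prime characteristic $p$, $I\subseteq S$ a squarefree monomial ideal, and $R=S/I$. If $\mathfrak q$ is a monomial prime ideal of $R$, then $\mathfrak q_e=\mathfrak q^{[p^e]}+\mathcal P(\mathfrak q)$ for every $e\in\mathbb N$.
   Context: A monomial ideal of $R$ is one generated by images of monomials. $\mathfrak q^{[p^e]}$ is the ideal generated by $p^e$-th powers of elements of $\mathfrak q$. $J_e=\{f\in R\mid \varphi(f^{1/p^e})\in J \text{ for all }\varphi\in\operatorname{Hom}_R(R^{1/p^e},R)\}$ and $\mathcal P(J)=\bigcap_{s\in\mathbb N}J_s$ (Cartier core). *)

(* Defs.v *)
From HB Require Import structures.
From mathcomp Require Import all_boot all_order all_algebra.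
From mathcomp Require Import generic_quotient ring_quotient.
Set Implicit Arguments. Unset Strict Implicit. Unset Printing Implicit Defensive.
Import GRing.Theory.
Local Open Scope ring_scope.

Fixpoint mpoly (K : fieldType) (n : nat) : comNzRingType :=
  match n with
  | 0 => K
  | m.+1 => {poly mpoly K m}
  end.

Fixpoint mvar (K : fieldType) (n : nat) (i : nat) : mpoly K n :=
  match n return mpoly K n with
  | 0 => 0
  | m.+1 => if i == m then ('X : {poly mpoly K m}) else (mvar K m i)%:P
  end.

Definition monomial (K : fieldType) (n : nat) (a : 'I_n -> nat) : mpoly K n :=
  \prod_(i < n) mvar K n i ^+ a i.

Definition sqfree_monomial (K : fieldType) (n : nat) (A : {set 'I_n}) : mpoly K n :=
  \prod_(i in A) mvar K n i.

Definition ideal_gen (R : comNzRingType) (G : R -> Prop) : R -> Prop :=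
  fun f => exists (k : nat) (r g : 'I_k -> R),
      (forall j, G (g j)) /\ f = \sum_(j < k) r j * g j.

Definition is_ideal (R : comNzRingType) (J : R -> Prop) : Prop :=
  [/\ J 0, (forall a b, J a -> J b -> J (a + b)) & (forall r a, J a -> J (r * a))].

Definition is_prime_ideal (R : comNzRingType) (J : R -> Prop) : Prop :=
  [/\ is_ideal J, ~ J 1 & (forall a b, J (a * b) -> J a \/ J b)].

Definition ideal_sum (R : comNzRingType) (A B : R -> Prop) : R -> Prop :=
  fun f => exists a b, [/\ A a, B b & f = a + b].

Definition ideal_eq (R : comNzRingType) (A B : R -> Prop) : Prop :=
  forall f, A f <-> B f.

Definition frob_pow (R : comNzRingType) (q : nat) (J : R -> Prop) : R -> Prop :=
  ideal_gen (fun f => exists g, J g /\ f = g ^+ q).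

Definition is_monomial_ideal (K : fieldType) (n : nat) (R : comNzRingType)
    (pi : mpoly K n -> R) (J : R -> Prop) : Prop :=
  ideal_eq J (ideal_gen (fun f => J f /\ exists a, f = pi (@monomial K n a))).

Definition is_sqfree_monomial_ideal (K : fieldType) (n : nat)
    (I : pred (mpoly K n)) : Prop :=
  exists T : {set {set 'I_n}},
    forall f, f \in I <-> ideal_gen (fun g => exists2 A, A \in T & g = @sqfree_monomial K n A) f.

(* K is F-finite: K is a finitely generated module over its subfield K^p. *)
Definition F_finite (K : fieldType) (p : nat) : Prop :=
  exists b : seq K, forall x : K,
    exists c : 'I_(size b) -> K, x = \sum_(i < size b) c i ^+ p * b`_i.

(* phi : R^{1/q} -> R is R-linear, where R^{1/q} = R with r . x = r^q x. *)
Definition frob_linear (R : comNzRingType) (q : nat) (phi : R -> R) : Prop :=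
  (forall x y, phi (x + y) = phi x + phi y) /\
  (forall r x, phi (r ^+ q * x) = r * phi x).

(* J_e = { f | phi(f^{1/p^e}) in J for all phi in Hom_R(R^{1/p^e}, R) }. *)
Definition J_e (R : comNzRingType) (p e : nat) (J : R -> Prop) : R -> Prop :=
  fun f => forall phi : R -> R, frob_linear (p ^ e) phi -> J (phi f).

Definition cartier_core (R : comNzRingType) (p : nat) (J : R -> Prop) : R -> Prop :=
  fun f => forall s : nat, J_e p s J f.

(* Main.v *)
Require Import Defs.
From HB Require Import structures.
From mathcomp Require Import all_boot all_order all_algebra.
From mathcomp Require Import generic_quotient ring_quotient.
From mathcomp Require Import ring lra zify.
From Stdlib Require Import Classical ClassicalEpsilon FunctionalExtensionality.
Set Implicit Arguments. Unset Strict Implicit. Unset Printing Implicit Defensive.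
Import GRing.Theory.
Local Open Scope ring_scope.

Section Ell.
Variables (K : fieldType) (p : nat).
Hypothesis pK : p \in [pchar K].

Lemma frobB (x y : K) : (x - y) ^+ p = x ^+ p - y ^+ p.
Proof. by rewrite -!(pFrobenius_autE pK) rmorphB. Qed.
Lemma frobD (x y : K) : (x + y) ^+ p = x ^+ p + y ^+ p.
Proof. by rewrite -!(pFrobenius_autE pK) rmorphD. Qed.

Fixpoint span (b : seq K) (x : K) : Prop :=
  match b with [::] => x = 0 | y :: c => exists d, span c (x - d ^+ p * y) end.

Lemma span0 b : span b 0.
Proof.
elim: b => [|y b IH] //=; exists 0.
by rewrite expr0n eqn0Ngt prime_gt0 ?(pcharf_prime pK) //= mul0r subr0.
Qed.

Lemma spanB b x x' : span b x -> span b x' -> span b (x - x').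
Proof.
elim: b x x' => [|y b IH] x x' /=; first by move=> -> ->; rewrite subr0.
move=> [d Hd] [d' Hd']; exists (d - d'); rewrite frobB.
have -> : x - x' - (d ^+ p - d' ^+ p) * y = (x - d ^+ p * y) - (x' - d' ^+ p * y) by ring.
exact: IH.
Qed.

Lemma spanZ b x t : span b x -> span b (t ^+ p * x).
Proof.
elim: b x => [|y b IH] x /=; first by move=> ->; rewrite mulr0.
move=> [d Hd]; exists (t * d); rewrite exprMn.
have -> : t ^+ p * x - t ^+ p * d ^+ p * y = t ^+ p * (x - d ^+ p * y) by ring.
exact: IH.
Qed.

Lemma span_sum b (c : 'I_(size b) -> K) :
  span b (\sum_(i < size b) c i ^+ p * b`_i).
Proof.
elim: b c => [|y b IH] c /=; first by rewrite big_ord0.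
exists (c ord0); rewrite big_ord_recl /= (addrC (c ord0 ^+ p * y)) addrK.
exact: (IH (fun i => c (lift ord0 i))).
Qed.

Lemma span_drop_step b j x : (j < size b)%N ->
  span (drop j b) x <-> exists d, span (drop j.+1 b) (x - d ^+ p * b`_j).
Proof. by move=> lt; rewrite (drop_nth 0 lt). Qed.

Lemma step_exists (P : nat -> Prop) m : P 0%N -> ~ P m ->
  exists j, (j < m)%N /\ P j /\ ~ P j.+1.
Proof.
elim: m => [|m IH] P0 Pm; first by [].
case: (classic (P m)) => Hm.
  by exists m; split.
have [j [lt [Pj Pj1]]] := IH P0 Hm; exists j; split => //; exact: ltnW.
Qed.

Lemma ell_exists : F_finite K p ->
  exists l : K -> K, [/\ forall x y, l (x + y) = l x + l y,
                          forall c x, l (c ^+ p * x) = c * l x &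
                          exists t, l t = 1].
Proof.
move=> [b Hb].
have Hall : forall x, span b x by move=> x; have [c ->] := Hb x; exact: span_sum.
have Hnot : ~ (forall x, span (drop (size b) b) x).
  by rewrite drop_size /= => /(_ 1) /eqP; rewrite oner_eq0.
have P0 : forall x, span (drop 0 b) x by rewrite drop0.
have [j [lt [Pj Pj1]]] := @step_exists (fun j => forall x, span (drop j b) x)
   (size b) P0 Hnot.
set W := span (drop j.+1 b) in Pj1; set y := b`_j.
have Hex : forall x, exists d, W (x - d ^+ p * y).
  by move=> x; have := Pj x; rewrite (span_drop_step _ lt).
have yW : ~ W y.
  move=> Wy; apply: Pj1 => x; have [d Hd] := Hex x.
  have := spanB (spanZ d Wy) (span0 _); rewrite subr0 => Wd.
  have := spanB Hd (spanB (span0 _) Wd); rewrite sub0r opprK; by rewrite subrK.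
have uniq : forall x d d', W (x - d ^+ p * y) -> W (x - d' ^+ p * y) -> d = d'.
  move=> x d d' H1 H2; case: (classic (d' - d = 0)) => [/eqP|nz].
    by rewrite subr_eq0 => /eqP.
  exfalso; apply: yW.
  have := spanZ ((d' - d)^-1) (spanB H1 H2).
  have -> : x - d ^+ p * y - (x - d' ^+ p * y) = (d' - d) ^+ p * y.
    by rewrite frobB; ring.
  by rewrite mulrA -exprMn mulVf ?expr1n ?mul1r //; apply/eqP.
pose l x := proj1_sig (constructive_indefinite_description _ (Hex x)).
have lP : forall x, W (x - (l x) ^+ p * y).
  by move=> x; rewrite /l; case: constructive_indefinite_description.
exists l; split.
- move=> x x'; apply: (uniq (x + x')) (lP _) _.
  rewrite frobD.
  have -> : x + x' - (l x ^+ p + l x' ^+ p) * y =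
            (x - l x ^+ p * y) - (0 - (x' - l x' ^+ p * y)) by ring.
  exact: spanB (lP _) (spanB (span0 _) (lP _)).
- move=> c x; apply: (uniq (c ^+ p * x)) (lP _) _.
  rewrite exprMn.
  have -> : c ^+ p * x - c ^+ p * l x ^+ p * y = c ^+ p * (x - l x ^+ p * y) by ring.
  exact: spanZ (lP _).
- exists y; apply: (uniq y) (lP _) _.
  by rewrite expr1n mul1r subrr; exact: span0.
Qed.

End Ell.

Lemma ellQ_exists (K : fieldType) (p e : nat) : p \in [pchar K] -> F_finite K p ->
  exists lQ : K -> K, [/\ forall x y, lQ (x + y) = lQ x + lQ y,
                          forall c x, lQ (c ^+ (p ^ e) * x) = c * lQ x &
                          exists t, lQ t = 1].
Proof.
move=> pK Ff; have [l [lD lS [y ly]]] := ell_exists pK Ff.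
elim: e => [|e [lQ [QD QS [t Qt]]]].
  exists id; split; [by [] | by move=> c x; rewrite expn0 expr1 | by exists 1].
exists (fun x => lQ (l x)); split.
- by move=> x x'; rewrite lD QD.
- by move=> c x; rewrite expnSr exprM lS QS.
- by exists (t ^+ p * y); rewrite lS ly mulr1.
Qed.

Section Poly.
Variable K : fieldType.

Definition res m (a : 'I_m.+1 -> nat) : 'I_m -> nat :=
  fun j => a (widen_ord (leqnSn m) j).
Definition ext m (a : 'I_m -> nat) (k : nat) : 'I_m.+1 -> nat :=
  fun i => if unlift ord_max i is Some j then a j else k.

Lemma widen_lift m (j : 'I_m) : widen_ord (leqnSn m) j = lift ord_max j.
Proof. by apply: val_inj; rewrite /= /bump leqNgt ltn_ord. Qed.

Lemma res_ext m (a : 'I_m -> nat) k : res (ext a k) = a.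
Proof. by apply: functional_extensionality => j; rewrite /res /ext widen_lift liftK. Qed.

Lemma ext_max m (a : 'I_m -> nat) k : ext a k ord_max = k.
Proof. by rewrite /ext unlift_none. Qed.

Lemma ext_res m (a : 'I_m.+1 -> nat) : ext (res a) (a ord_max) = a.
Proof.
apply: functional_extensionality => i; rewrite /ext.
case: unliftP => [j ->|-> //]; by rewrite /res widen_lift.
Qed.

Fixpoint coef n : mpoly K n -> ('I_n -> nat) -> K :=
  match n return mpoly K n -> ('I_n -> nat) -> K with
  | 0 => fun F _ => F
  | m.+1 => fun (F : {poly mpoly K m}) a => coef (F`_(a ord_max)) (res a)
  end.

Fixpoint kst n : K -> mpoly K n :=
  match n return K -> mpoly K n with
  | 0 => fun c => c
  | m.+1 => fun c => ((kst m c)%:P : {poly mpoly K m})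
  end.

Lemma coef_inj n (F G : mpoly K n) : (forall a, coef F a = coef G a) -> F = G.
Proof.
elim: n F G => [|n IH] F G H; first exact: (H (fun _ => 0%N)).
apply/polyP => k; apply: IH => a'.
by have := H (ext a' k); rewrite /= ext_max res_ext.
Qed.

Lemma mcoef0 n a : coef (0 : mpoly K n) a = 0.
Proof. by elim: n a => [|n IH] a //=; rewrite coef0 IH. Qed.

Lemma mcoefD n (F G : mpoly K n) a : coef (F + G) a = coef F a + coef G a.
Proof. by elim: n F G a => [|n IH] F G a //=; rewrite coefD IH. Qed.

Lemma mcoefN n (F : mpoly K n) a : coef (- F) a = - coef F a.
Proof. by elim: n F a => [|n IH] F a //=; rewrite coefN IH. Qed.

Lemma mcoefB n (F G : mpoly K n) a : coef (F - G) a = coef F a - coef G a.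
Proof. by rewrite mcoefD mcoefN. Qed.

Lemma mcoef_sum n I (r : seq I) (P : pred I) (F : I -> mpoly K n) a :
  coef (\sum_(i <- r | P i) F i) a = \sum_(i <- r | P i) coef (F i) a.
Proof.
elim/big_rec2: _ => [|i x y _ <-]; first exact: mcoef0.
exact: mcoefD.
Qed.

Lemma coef_kstM n c (F : mpoly K n) a : coef (kst n c * F) a = c * coef F a.
Proof. by elim: n F a => [|n IH] F a //=; rewrite coefCM IH. Qed.

Lemma kstM n c d : kst n (c * d) = kst n c * kst n d.
Proof. by elim: n => [|n IH] //=; rewrite IH polyCM. Qed.

Lemma mvar_widen m (j : 'I_m) :
  mvar K m.+1 (widen_ord (leqnSn m) j) = (mvar K m j)%:P.
Proof. by rewrite /= ltn_eqF. Qed.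

Lemma mvar_max m : mvar K m.+1 (@ord_max m) = 'X.
Proof. by rewrite /= eqxx. Qed.

Lemma monomialS m (a : 'I_m.+1 -> nat) :
  monomial K a = ((monomial K (res a))%:P * 'X^(a ord_max) : {poly mpoly K m}).
Proof.
rewrite /monomial big_ord_recr /= eqxx; congr (_ * _).
rewrite rmorph_prod; apply: eq_bigr => j _.
by rewrite /res rmorphXn /= ltn_eqF.
Qed.


Lemma forall_splitS m (P : 'I_m.+1 -> bool) :
  [forall i, P i] = P ord_max && [forall j : 'I_m, P (widen_ord (leqnSn m) j)].
Proof.
apply/forallP/andP => [H|[H1 /forallP H2] i]; first by split => //; apply/forallP.
case: (unliftP ord_max i) => [j ->|-> //]; by rewrite -widen_lift.
Qed.

Definition leqv n (c a : 'I_n -> nat) : bool := [forall i, (c i <= a i)%N].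

Lemma coef_mulmon n (F : mpoly K n) c a :
  coef (F * monomial K c) a =
  if leqv c a then coef F (fun i => a i - c i)%N else 0.
Proof.
elim: n F c a => [|n IH] F c a.
  by rewrite /= /monomial big_ord0 mulr1 /leqv; case: forallP => // [[]] [].
rewrite monomialS /= mulrA coefMXn /leqv forall_splitS -/(leqv (res c) (res a)).
case: (leqP (c ord_max) (a ord_max)) => H /=.
  by rewrite coefMC IH.
by rewrite mcoef0.
Qed.


Fixpoint restr n : (('I_n -> nat) -> bool) -> mpoly K n -> mpoly K n :=
  match n return (('I_n -> nat) -> bool) -> mpoly K n -> mpoly K n with
  | 0 => fun P F => if P (fun _ => 0%N) then F else 0
  | m.+1 => fun P (F : {poly mpoly K m}) =>
      (\poly_(k < size F) restr (fun a' => P (ext a' k)) F`_k : {poly mpoly K m})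
  end.

Lemma coef_restr n P (F : mpoly K n) a :
  coef (restr P F) a = if P a then coef F a else 0.
Proof.
elim: n P F a => [|n IH] P F a.
  have -> : a = (fun _ => 0%N) by apply: functional_extensionality => -[].
  by rewrite /=; case: ifP.
rewrite /= coef_poly; case: ltnP => H.
  by rewrite IH ext_res.
by rewrite mcoef0 nth_default // mcoef0; case: ifP.
Qed.

Lemma restr_ind n (Q : mpoly K n -> Prop) (P : ('I_n -> nat) -> bool) (F : mpoly K n) :
  Q 0 -> (forall x y, Q x -> Q y -> Q (x + y)) ->
  (forall a c, P a -> Q (kst n c * monomial K a)) -> Q (restr P F).
Proof.
elim: n Q P F => [|n IH] Q P F Q0 QD QM.
  rewrite /=; case: ifP => // HP.
  have := QM (fun _ => 0%N) F HP; by rewrite /= /monomial big_ord0 mulr1.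
rewrite /= poly_def; elim/big_ind: _ => // k _.
apply: (IH (fun G => Q (G *: 'X^k))); first by rewrite scale0r.
  by move=> x y Hx Hy; rewrite scalerDl; exact: QD.
move=> a c HP; have := QM (ext a k) c HP.
by rewrite monomialS res_ext ext_max /= mulrA -polyCM mul_polyC.
Qed.

Lemma restr_split n (P : ('I_n -> nat) -> bool) (F : mpoly K n) :
  F = restr P F + restr (fun a => ~~ P a) F.
Proof.
apply: coef_inj => a; rewrite mcoefD !coef_restr.
by case: (P a); rewrite /= ?addr0 ?add0r.
Qed.

Lemma monD n (a b : 'I_n -> nat) :
  monomial K (fun i => a i + b i)%N = monomial K a * monomial K b.
Proof. by rewrite /monomial -big_split /=; apply: eq_bigr => i _; rewrite exprD. Qed.

Lemma monM n (a : 'I_n -> nat) (q : nat) :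
  monomial K (fun i => q * a i)%N = monomial K a ^+ q.
Proof.
rewrite /monomial -prodrXl; apply: eq_bigr => i _; by rewrite -exprM mulnC.
Qed.

Lemma monE n (a b : 'I_n -> nat) : (forall i, a i = b i) -> monomial K a = monomial K b.
Proof. by move=> H; congr monomial; apply: functional_extensionality. Qed.

Definition ind n (A : {set 'I_n}) : 'I_n -> nat := fun i => (i \in A : nat).
Definition dlt n (j : 'I_n) : 'I_n -> nat := fun i => (i == j : nat).

Lemma sqfree_mon n (A : {set 'I_n}) : sqfree_monomial K A = monomial K (ind A).
Proof.
rewrite /sqfree_monomial /monomial big_mkcond /=; apply: eq_bigr => i _.
by rewrite /ind; case: (i \in A); rewrite ?expr1 ?expr0.
Qed.

Lemma mvar_mon n (j : 'I_n) : mvar K n j = monomial K (dlt j).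
Proof.
rewrite /monomial (bigD1 j) //= /dlt eqxx expr1 big1 ?mulr1 // => i /negbTE ->.
by rewrite expr0.
Qed.

End Poly.

Lemma pchar_mpoly (K : fieldType) p n : p \in [pchar K] -> p \in [pchar mpoly K n].
Proof. by move=> pK; elim: n => [|n IH] //=; rewrite pchar_poly. Qed.

Lemma frobDn (R : comNzRingType) p e (x y : R) : p \in [pchar R] ->
  (x + y) ^+ (p ^ e) = x ^+ (p ^ e) + y ^+ (p ^ e).
Proof.
move=> pR; apply: exprDn_pchar; rewrite pnatX (eq_pnat _ (pcharf_eq pR)).
by rewrite pnat_id ?(pcharf_prime pR).
Qed.

Section Dsec.
Variables (K : fieldType) (p e : nat) (lQ : K -> K).
Hypothesis pK : p \in [pchar K].
Hypothesis lD : forall x y, lQ (x + y) = lQ x + lQ y.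
Hypothesis lS : forall c x, lQ (c ^+ (p ^ e) * x) = c * lQ x.
Local Notation Q := (p ^ e)%N.

Lemma Qgt0 : (0 < Q)%N.
Proof. by rewrite expn_gt0 prime_gt0 ?(pcharf_prime pK). Qed.

Lemma l0 : lQ 0 = 0.
Proof. by have := lD 0 0; rewrite addr0 => /eqP; rewrite -subr_eq subrr eq_sym => /eqP. Qed.

Fixpoint Dop n : mpoly K n -> mpoly K n :=
  match n return mpoly K n -> mpoly K n with
  | 0 => fun F => lQ F
  | m.+1 => fun (F : {poly mpoly K m}) =>
      (\poly_(k < size F) Dop F`_(Q * k + (Q - 1)) : {poly mpoly K m})
  end.

Lemma Dop0 n : Dop (0 : mpoly K n) = 0.
Proof.
elim: n => [|n IH] /=; first exact: l0.
by apply/polyP => k; rewrite coef_poly !coef0 IH; case: ifP.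
Qed.

Lemma coef_Dpoly m (F : {poly mpoly K m}) k :
  (Dop (F : mpoly K m.+1) : {poly mpoly K m})`_k = Dop F`_(Q * k + (Q - 1)).
Proof.
rewrite /= coef_poly; case: ltnP => // H.
rewrite nth_default ?Dop0 //.
by apply: leq_trans H (leq_trans (leq_pmull k Qgt0) (leq_addr _ _)).
Qed.

Lemma coef_Dop n (F : mpoly K n) r :
  coef (Dop F) r = lQ (coef F (fun i => Q * r i + (Q - 1))%N).
Proof.
elim: n F r => [|n IH] F r //.
by rewrite /= -/(Dop (F : mpoly K n.+1)) coef_Dpoly IH.
Qed.

Lemma DopD n (F G : mpoly K n) : Dop (F + G) = Dop F + Dop G.
Proof. by apply: coef_inj => a; rewrite mcoefD !coef_Dop mcoefD lD. Qed.

Lemma Dop_sum n I (r : seq I) (P : pred I) (F : I -> mpoly K n) :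
  Dop (\sum_(i <- r | P i) F i) = \sum_(i <- r | P i) Dop (F i).
Proof.
elim/big_rec2: _ => [|i x y _ <-]; first exact: Dop0.
exact: DopD.
Qed.

Lemma DopS n (G F : mpoly K n) : Dop (G ^+ Q * F) = G * Dop F.
Proof.
elim: n G F => [|n IH] G F; first exact: lS.
have pS : p \in [pchar mpoly K n.+1] by exact: pchar_mpoly.
elim/poly_ind: G F => [|G c IHG] F.
  rewrite expr0n eqn0Ngt Qgt0 (_ : (~~ true)%:R = 0) // !mul0r; exact: (Dop0 n.+1).
rewrite frobDn // mulrDl DopD exprMn -mulrA IHG -polyC_exp.
have -> : @Dop n.+1 ((c ^+ Q)%:P * F) = (c%:P : {poly mpoly K n}) * Dop F.
  apply/polyP => k; rewrite -/(Dop (_ : mpoly K n.+1)) coef_Dpoly coefCM IH.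
  by rewrite coefCM coef_Dpoly.
have -> : @Dop n.+1 ('X ^+ Q * F) = ('X : {poly mpoly K n}) * Dop F.
  apply/polyP => k; rewrite -/(Dop (_ : mpoly K n.+1)) coef_Dpoly coefXnM coefXM.
  case: k => [|k].
    have -> : (Q * 0 + (Q - 1) < Q)%N by rewrite muln0 add0n; have := Qgt0; lia.
    by rewrite eqxx; exact: Dop0.
  have H1 : (Q <= Q * k.+1 + (Q - 1))%N by rewrite mulnS -addnA leq_addr.
  rewrite ltnNge H1 /= coef_Dpoly.
  by rewrite mulnS -addnA addKn.
by rewrite mulrDl mulrA.
Qed.

End Dsec.

Definition pb (P : Prop) : bool := if excluded_middle_informative P then true else false.
Lemma pbP (P : Prop) : reflect P (pb P).
Proof. by rewrite /pb; case: excluded_middle_informative => H; constructor. Qed.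

Section Main.
Variables (K : fieldType) (n : nat) (I : idealr (mpoly K n)).
Local Notation S := (mpoly K n).
Local Notation R := {ideal_quot I}.
Local Notation pi := (\pi_R)%qT.
Variable qq : R -> Prop.
Variable T : {set {set 'I_n}}.
Hypothesis HT : forall f, f \in (I : pred S) <->
  ideal_gen (fun g => exists2 A, A \in T & g = @sqfree_monomial K n A) f.
Hypothesis qprime : is_prime_ideal qq.
Hypothesis qmono : is_monomial_ideal (fun f : S => pi f) qq.

Lemma piE (x y : S) : pi x = pi y <-> x - y \in (I : pred S).
Proof. rewrite Quotient.idealrBE; split => [H|/eqP H]; [apply/eqP; exact: H| exact: H]. Qed.

Lemma pi0E (x : S) : pi x = 0 <-> x \in (I : pred S).
Proof. by rewrite -(rmorph0 pi) piE subr0. Qed.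

Lemma qq0 : qq 0. Proof. by case: qprime => [[]]. Qed.
Lemma qqD a b : qq a -> qq b -> qq (a + b). Proof. by case: qprime => [[_ H _]] _ _; exact: H. Qed.
Lemma qqM r a : qq a -> qq (r * a). Proof. by case: qprime => [[_ _ H]] _ _; exact: H. Qed.
Lemma qq1 : ~ qq 1. Proof. by case: qprime. Qed.
Lemma qqP a b : qq (a * b) -> qq a \/ qq b. Proof. by case: qprime => _ _ H; exact: H. Qed.

Lemma qqX a k : ~ qq a -> ~ qq (a ^+ k).
Proof.
move=> Ha; elim: k => [|k IH]; first by rewrite expr0; exact: qq1.
by rewrite exprS => /qqP [].
Qed.

Lemma sqI A : A \in T -> sqfree_monomial K A \in (I : pred S).
Proof.
move=> AT; apply/HT; exists 1%N, (fun _ => 1), (fun _ => sqfree_monomial K A).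
by split; [move=> _; exists A | rewrite big_ord1 mul1r].
Qed.

Definition face (s : {set 'I_n}) : bool := [forall G in T, ~~ (G \subset s)].
Definition supp (a : 'I_n -> nat) : {set 'I_n} := [set i | a i != 0%N].
Definition B : {set 'I_n} := [set i : 'I_n | pb (~ qq (pi (mvar K n i)))].

Lemma inB i : (i \in B) <-> ~ qq (pi (mvar K n i)).
Proof. by rewrite inE; split => /pbP. Qed.

Lemma coefI_face H c : H \in (I : pred S) -> face (supp c) -> coef H c = 0.
Proof.
move=> /HT [k [r [g [Hg ->]]]] Hf; rewrite mcoef_sum big1 // => j _.
have [A AT ->] := Hg j; rewrite sqfree_mon coef_mulmon.
case: ifP => // /forallP Hle; exfalso.
move/forallP: Hf => /(_ A); rewrite AT /= => /negP; apply.
apply/subsetP => i iA; rewrite inE; have := Hle i; rewrite /ind iA.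
by rewrite -lt0n.
Qed.

Lemma pi_mon (b : 'I_n -> nat) : pi (monomial K b) = \prod_(i < n) pi (mvar K n i) ^+ b i.
Proof. by rewrite /monomial rmorph_prod; apply: eq_bigr => i _; rewrite rmorphXn. Qed.

Lemma mon_notq (b : 'I_n -> nat) : (forall i, b i != 0%N -> i \in B) -> ~ qq (pi (monomial K b)).
Proof.
move=> Hb; rewrite pi_mon; elim/big_rec: _ => [|i x _ Hx]; first exact: qq1.
move=> /qqP [|//]; case: (eqVneq (b i) 0%N) => [->|/Hb /inB Hi].
  by rewrite expr0; exact: qq1.
exact: qqX.
Qed.

Lemma B_face : face B.
Proof.
apply/forallP => G; apply/implyP => GT; apply/negP => GB.
have := sqI GT; rewrite -pi0E sqfree_mon => H.
apply: (@mon_notq (ind G)); last by rewrite H; exact: qq0.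
by move=> i; rewrite /ind; case: (boolP (i \in G)) => // iG _; exact: (subsetP GB).
Qed.

Lemma mon_q (b : 'I_n -> nat) i : i \notin B -> b i != 0%N -> qq (pi (monomial K b)).
Proof.
move=> iB bi.
have -> : monomial K b = monomial K (dlt i) * monomial K (fun j => b j - dlt i j)%N.
  rewrite -monD; apply: monE => j; rewrite /dlt; case: eqP => [->|] /=; last by rewrite subn0.
  by rewrite add1n subn1 prednK // lt0n.
rewrite rmorphM mulrC; apply: qqM; rewrite -mvar_mon.
by apply: NNPP => H; move: iB; rewrite (proj2 (inB i) H).
Qed.


Lemma face_sub (s t : {set 'I_n}) : s \subset t -> face t -> face s.
Proof.
move=> st /forallP Ht; apply/forallP => G; apply/implyP => GT.
apply/negP => Gs; move: (Ht G); rewrite GT /= => /negP; apply.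
exact: subset_trans Gs st.
Qed.

Lemma coefq h r : qq (pi h) -> (forall i, r i != 0%N -> i \in B) -> coef h r = 0.
Proof.
move=> /qmono [k [rr [g [Hg Hh]]]] Hr.
pose b j := proj1_sig (constructive_indefinite_description _ (proj2 (Hg j))).
have gb : forall j, g j = pi (monomial K (b j)).
  by move=> j; rewrite /b; case: constructive_indefinite_description.
pose H' := \sum_(j < k) repr (rr j) * monomial K (b j).
have piH : pi h = pi H'.
  rewrite Hh rmorph_sum; apply: eq_bigr => j _; rewrite rmorphM gb; congr (_ * _); symmetry; exact: reprK.
have : h = (h - H') + H' by rewrite subrK.
move=> ->; rewrite mcoefD (@coefI_face _ r); first last.
- apply: face_sub B_face; apply/subsetP => i; rewrite inE; exact: Hr.
- by apply/piE.
rewrite add0r mcoef_sum big1 // => j _; rewrite coef_mulmon.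
case: ifP => // /forallP Hle; exfalso.
have := proj1 (Hg j); rewrite gb; apply: mon_notq => i bi; apply: Hr.
by rewrite -lt0n; apply: leq_trans (Hle i); rewrite lt0n.
Qed.

Lemma ind_supp (s : {set 'I_n}) a i : (ind s i + a i != 0)%N = (i \in s) || (a i != 0%N).
Proof. by rewrite /ind; case: (i \in s); rewrite ?add1n ?add0n. Qed.

Lemma L1 (tau : {set 'I_n}) y : face tau -> B \subset tau ->
  y * pi (monomial K (ind tau)) = 0 -> qq y.
Proof.
move=> ftau Btau.
rewrite -[y]reprK -rmorphM pi0E; set h := repr y => hI.
rewrite (restr_split (fun a => supp a \subset tau) h) rmorphD.
have -> : restr (fun a => supp a \subset tau) h = 0.
  apply: coef_inj => a; rewrite coef_restr mcoef0; case: ifP => // sa.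
  have := @coefI_face _ (fun i => ind tau i + a i)%N hI.
  rewrite coef_mulmon.
  have -> : leqv (ind tau) (fun i => ind tau i + a i)%N by apply/forallP => i; rewrite leq_addr.
  have -> : (fun i => ind tau i + a i - ind tau i)%N = a.
    by apply: functional_extensionality => i; rewrite addKn.
  apply; apply: face_sub ftau; apply/subsetP => i; rewrite inE ind_supp.
  by case/orP => // ai; apply: (subsetP sa); rewrite inE.
rewrite rmorph0 add0r; apply: (@restr_ind _ _ (fun G => qq (pi G))).
- by rewrite rmorph0; exact: qq0.
- by move=> x z Hx Hz; rewrite rmorphD; exact: qqD.
move=> a c /subsetPn [i]; rewrite inE => ai itau.
rewrite rmorphM; apply: qqM; apply: (mon_q (i := i)) => //.
by apply: contra itau; apply: (subsetP Btau).
Qed.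


Lemma phi0 (Q : nat) (phi : R -> R) : frob_linear Q phi -> phi 0 = 0.
Proof.
move=> [HD _]; have := HD 0 0; rewrite addr0 => /eqP.
by rewrite -subr_eq subrr eq_sym => /eqP.
Qed.

Lemma Je0 p s : J_e p s qq 0.
Proof. by move=> phi Hphi; rewrite (phi0 Hphi); exact: qq0. Qed.

Lemma JeD p s x y : J_e p s qq x -> J_e p s qq y -> J_e p s qq (x + y).
Proof. by move=> Hx Hy phi Hphi; rewrite (proj1 Hphi); apply: qqD; [apply: Hx | apply: Hy]. Qed.

Lemma JeM p s r x : J_e p s qq x -> J_e p s qq (r * x).
Proof.
move=> Hx phi [HD HS]; apply: (Hx (fun z => phi (r * z))); split.
  by move=> u v; rewrite mulrDr HD.
by move=> c u; rewrite mulrCA HS.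
Qed.

Lemma ccD p x y : cartier_core p qq x -> cartier_core p qq y -> cartier_core p qq (x + y).
Proof. by move=> Hx Hy s; apply: JeD. Qed.
Lemma ccM p r x : cartier_core p qq x -> cartier_core p qq (r * x).
Proof. by move=> Hx s; apply: JeM. Qed.
Lemma cc0 p : cartier_core p qq 0.
Proof. by move=> s; apply: Je0. Qed.

Lemma L1cc p (tau : {set 'I_n}) x : prime p -> face tau -> B \subset tau ->
  x * pi (monomial K (ind tau)) = 0 -> cartier_core p qq x.
Proof.
move=> pr ft Bt Hx s phi [HD HS]; apply: (L1 ft Bt).
set m := pi (monomial K (ind tau)).
have Q0 : (0 < p ^ s)%N by rewrite expn_gt0 prime_gt0.
rewrite mulrC -HS -(prednK Q0) exprSr -mulrA (mulrC m x) Hx mulr0.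
exact: (phi0 (conj HD HS)).
Qed.

Lemma ig0 (G : R -> Prop) : ideal_gen G 0.
Proof. by exists 0%N, (fun _ => 0), (fun _ => 0); split; [case|rewrite big_ord0]. Qed.

Lemma igM (G : R -> Prop) r x : ideal_gen G x -> ideal_gen G (r * x).
Proof.
move=> [k [rr [g [Hg ->]]]]; exists k, (fun j => r * rr j), g; split => //.
by rewrite mulr_sumr; apply: eq_bigr => j _; rewrite mulrA.
Qed.

Lemma igD (G : R -> Prop) x y : ideal_gen G x -> ideal_gen G y -> ideal_gen G (x + y).
Proof.
move=> [k [rr [g [Hg ->]]]] [k' [rr' [g' [Hg' ->]]]].
exists (k + k')%N, (fun j => match split j with inl a => rr a | inr b => rr' b end),
  (fun j => match split j with inl a => g a | inr b => g' b end); split.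
  by move=> j; case: split.
rewrite big_split_ord /=; congr (_ + _); apply: eq_bigr => j _.
  by rewrite -[lshift _ _]/(unsplit (inl _ j)) unsplitK.
by rewrite -[rshift _ _]/(unsplit (inr _ j)) unsplitK.
Qed.

Lemma ig1 (G : R -> Prop) r x : G x -> ideal_gen G (r * x).
Proof.
by move=> Gx; exists 1%N, (fun _ => r), (fun _ => x); split => //; rewrite big_ord1.
Qed.

Lemma classii_I a (tau : {set 'I_n}) : ~~ face (supp a :|: tau) ->
  monomial K a * monomial K (ind tau) \in (I : pred S).
Proof.
move=> /forallPn [G]; rewrite negb_imply negbK => /andP [GT Gsub].
have -> : monomial K a * monomial K (ind tau) =
   monomial K (ind G) * monomial K (fun i => a i + ind tau i - ind G i)%N.
  rewrite -!monD; apply: monE => i; rewrite /ind.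
  case: (boolP (i \in G)) => iG /=; last by rewrite !add0n subn0.
  have := subsetP Gsub i iG; rewrite !inE; case: (i \in tau) => /=.
    by rewrite addn1 add1n subn1.
  by rewrite orbF addn0 => ai; rewrite add1n subn1 prednK // lt0n.
rewrite mulrC; apply: idealMr; rewrite -sqfree_mon; exact: sqI.
Qed.


Section Phi.
Variables (p e : nat) (lQ : K -> K).
Hypothesis pK : p \in [pchar K].
Hypothesis lD : forall x y, lQ (x + y) = lQ x + lQ y.
Hypothesis lS : forall c x, lQ (c ^+ (p ^ e) * x) = c * lQ x.
Local Notation Q := (p ^ e)%N.
Local Notation D := (@Dop K p e lQ n).

Definition WDcond (w : 'I_n -> nat) := forall G, G \in T ->
  exists2 G', G' \in T & forall i, i \in G' -> (Q <= w i + ind G i)%N.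

Lemma WD w d H : WDcond w -> H \in (I : pred S) ->
  D (kst n d * monomial K w * H) \in (I : pred S).
Proof.
move=> Hw /HT [k [r [g [Hg ->]]]].
rewrite mulr_sumr (Dop_sum e pK lD); apply: rpred_sum => j _.
have [G GT ->] := Hg j; have [G' G'T HG'] := Hw G GT.
have -> : kst n d * monomial K w * (r j * sqfree_monomial K G) =
   monomial K (ind G') ^+ Q *
     (kst n d * r j * monomial K (fun i => w i + ind G i - Q * ind G' i)%N).
  rewrite -monM sqfree_mon.
  have E : monomial K w * monomial K (ind G) =
     monomial K (fun i => Q * ind G' i)%N *
     monomial K (fun i => w i + ind G i - Q * ind G' i)%N.
    rewrite -!monD; apply: monE => i; rewrite subnKC //.
    rewrite /ind; case: (boolP (i \in G')) => iG' /=; last by rewrite muln0.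
    by rewrite muln1; apply: HG'.
  transitivity (kst n d * r j * (monomial K w * monomial K (ind G))); first by ring.
  by rewrite E; ring.
rewrite (DopS pK lD lS) mulrC; apply: idealMr; rewrite -sqfree_mon; exact: sqI.
Qed.

Definition phiD w d (x : R) : R := pi (D (kst n d * monomial K w * repr x)).

Lemma DopB (F G : S) : D (F - G) = D F - D G.
Proof.
apply/eqP; rewrite eq_sym subr_eq -(DopD e pK lD) subrK //.
Qed.

Lemma phi_frob w d : WDcond w -> frob_linear Q (phiD w d).
Proof.
move=> Hw; rewrite /phiD; set M := kst n d * monomial K w; split.
  move=> x y; rewrite -rmorphD; apply/piE.
  rewrite -(DopD e pK lD) -(DopB) -mulrDr -mulrBr; apply: WD => //.
  by apply/piE; rewrite reprK rmorphD; congr (_ + _); symmetry; exact: reprK.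
move=> r x; apply/eqP; rewrite -subr_eq0; apply/eqP.
have -> : r * pi (D (M * repr x)) = pi (D (repr r ^+ Q * (M * repr x))).
  by rewrite (DopS pK lD lS) rmorphM; congr (_ * _); symmetry; exact: reprK.
rewrite -rmorphB -DopB mulrCA -mulrBr; apply/pi0E; apply: WD => //.
by apply/piE; rewrite reprK rmorphM rmorphXn; congr (_ ^+ _ * _); symmetry; exact: reprK.
Qed.

End Phi.


Section Det.
Variables (p e : nat) (lQ : K -> K) (t : K).
Hypothesis pK : p \in [pchar K].
Hypothesis lD : forall x y, lQ (x + y) = lQ x + lQ y.
Hypothesis lS : forall c x, lQ (c ^+ (p ^ e) * x) = c * lQ x.
Hypothesis lt1 : lQ t = 1.
Local Notation Q := (p ^ e)%N.

Definition classii (a : 'I_n -> nat) : bool :=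
  [exists tau : {set 'I_n}, [&& face tau, B \subset tau & ~~ face (supp a :|: tau)]].
Definition bigA (a : 'I_n -> nat) : bool := [exists i, (i \notin B) && (Q <= a i)%N].

Lemma detect f a : J_e p e qq f -> ~~ classii a -> ~~ bigA a -> coef (repr f) a = 0.
Proof.
move=> Jf nii nA; set F := repr f.
apply: NNPP => cnz.
have Q0 : (0 < Q)%N by rewrite expn_gt0 prime_gt0 ?(pcharf_prime pK).
have aQ : forall i, i \notin B -> (a i < Q)%N.
  move=> i iB; rewrite ltnNge; apply/negP => H; move/negP: nA; apply.
  by apply/existsP; exists i; rewrite iB.
pose w i := if i \in B then (Q * (a i).+1 + (Q - 1) - a i)%N else (Q - 1 - a i)%N.
pose r i := if i \in B then (a i).+1 else 0%N.
pose d := t / coef F a.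
have Hw : WDcond p e w.
  move=> G GT.
  pose tau := (G :\: supp a) :|: B.
  have ntau : ~~ face tau.
    apply/negP => ft; move/negP: nii; apply; apply/existsP; exists tau.
    rewrite ft subsetUr /=; apply/forallPn; exists G; rewrite GT /= negbK.
    apply/subsetP => i iG; rewrite !inE iG /=.
    by case: (a i != 0%N).
  move/forallPn: ntau => [G']; rewrite negb_imply negbK => /andP [G'T G't].
  exists G' => // i iG'; rewrite /w /ind.
  have := subsetP G't i iG'; rewrite !inE => /orP [/andP [ai iG]|iB].
    case: ifP => iB; first by have := leq_pmull (a i).+1 Q0; lia.
    rewrite iG; move: ai; rewrite negbK => /eqP ->; lia.
  rewrite iB; have := leq_pmull (a i).+1 Q0; lia.
have Jphi := Jf _ (phi_frob pK lD lS d Hw).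
rewrite /phiD in Jphi.
have := coefq Jphi (r := r); rewrite (coef_Dop e pK lD).
have -> : kst n d * monomial K w * repr f = kst n d * (F * monomial K w) by rewrite /F; ring.
rewrite coef_kstM coef_mulmon.
have -> : leqv w (fun i => Q * r i + (Q - 1))%N.
  apply/forallP => i; rewrite /w /r; case: ifP => iB.
    by set X := (Q * _)%N; lia.
  by rewrite muln0; lia.
have -> : (fun i => Q * r i + (Q - 1) - w i)%N = a.
  apply: functional_extensionality => i; rewrite /w /r; case: ifP => iB.
    have := leq_pmull (a i).+1 Q0; set X := (Q * _)%N; lia.
  have := aQ i (negbT iB); rewrite muln0; lia.
rewrite /d mulrAC -mulrA mulfV ?mulr1 ?lt1; last by apply/eqP.
move=> H; have : (1 : K) = 0 by apply: H => i; rewrite /r; case: ifP.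
by move/eqP; rewrite oner_eq0.
Qed.

End Det.

End Main.

Unset Implicit Arguments. Set Strict Implicit. Set Printing Implicit Defensive.

Theorem mainTheorem11 (p : nat) (K : fieldType) (n : nat)
    (I : idealr (mpoly K n))
    (q : {ideal_quot I} -> Prop) :
  prime p -> p \in [pchar K] -> F_finite K p ->
  is_sqfree_monomial_ideal (I : pred (mpoly K n)) ->
  is_prime_ideal q ->
  is_monomial_ideal (fun f : mpoly K n => (\pi_({ideal_quot I}) f)%qT) q ->
  forall e : nat,
    ideal_eq (J_e p e q) (ideal_sum (frob_pow (p ^ e) q) (cartier_core p q)).
Proof.
move=> pr pK Ff [T HT] qprime qmono e f; split.
- move=> Jf.
  have [lQ [lD lS [t lt1]]] := ellQ_exists e pK Ff.
  set F := repr f.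
  have EF : F = restr (fun a => ~~ classii q T a && bigA q p e a) F + restr (classii q T) F.
    apply: coef_inj => a; rewrite mcoefD !coef_restr.
    case: (boolP (classii q T a)) => ii /=; first by rewrite add0r.
    case: (boolP (bigA q p e a)) => bA; first by rewrite addr0.
    by rewrite addr0 (detect HT qprime qmono pK lD lS lt1 Jf ii bA).
  exists (\pi_({ideal_quot I}) (restr (fun a => ~~ classii q T a && bigA q p e a) F))%qT,
         (\pi_({ideal_quot I}) (restr (classii q T) F))%qT; split.
  + apply: (@restr_ind _ _ (fun G => frob_pow (p ^ e) q (\pi_({ideal_quot I}) G)%qT)).
    * by rewrite rmorph0; exact: ig0.
    * by move=> x y Hx Hy; rewrite rmorphD; exact: igD.
    move=> a c /andP [_ /existsP [i /andP [iB Qa]]].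
    have -> : monomial K a = mvar K n i ^+ (p ^ e) * monomial K (fun j => a j - (p ^ e) * dlt i j)%N.
      rewrite mvar_mon -monM -monD; apply: monE => j; rewrite /dlt.
      case: eqP => [->|_] /=; first by rewrite muln1 subnKC.
      by rewrite muln0 subn0.
    rewrite mulrCA rmorphM rmorphXn mulrC; apply: ig1.
    exists (\pi_({ideal_quot I}) (mvar K n i))%qT; split => //.
    by apply: NNPP => H; move: iB; rewrite (proj2 (inB q i) H).
  + apply: (@restr_ind _ _ (fun G => cartier_core p q (\pi_({ideal_quot I}) G)%qT)).
    * by rewrite rmorph0; exact: cc0.
    * by move=> x y Hx Hy; rewrite rmorphD; exact: ccD.
    move=> a c /existsP [tau /and3P [ft Bt nf]].
    rewrite rmorphM; apply: ccM; apply: (L1cc HT qprime pr ft Bt).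
    rewrite -rmorphM; apply/pi0E; by have := classii_I HT nf.
  + by rewrite -rmorphD -EF /F; symmetry; exact: reprK.
- move=> [a [b [[k [r [g [Hg ->]]] Hb ->]]]].
  apply: (JeD qprime); last exact: (Hb e).
  apply: (big_ind (J_e p e q)); [exact: (Je0 qprime) | by move=> x y; apply: (JeD qprime) |].
  move=> j _; have [h [qh ->]] := Hg j.
  move=> phi [HD HS]; rewrite mulrC HS mulrC; apply: (qqM qprime); exact: qh.
Qed.
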